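(* Consider the coupled jump dynamics on the state space $S$ described below. For every state $(\underline x,I,\underline y,J,N)\in S$ and every one of the four types of jumps, the state $(\underline x',I',\underline y',J',N')$ after the jump belongs to $S$, and $I'\setminus I'_=\subseteq I\setminus I_=$. Moreover, in a death event, for every $i\in I\cap I'$ one has $|x'_i-y'_i|\le|x_i-y_i|$.
   Context: Fix $j>0$, $\varepsilon>0$ with $\varepsilon^{-1}\in\mathbb N$, $\Lambda_\varepsilon=\{0,\dots,\varepsilon^{-1}\}$, and integers $n>0$, $m\ge0$. A labeled configuration is a pair $(\underline x,I)$ with $I\subset\mathbb N$ finite and $\underline x=(x_i)_{i\in I}$, $x_i\in\Lambda_\varepsilon$. The state space $S$ consists of all $(\underline x,I,\underline y,J,N)$ with $(\underline x,I),(\underline y,J)$ labeled configurations, $I\subset J$, $|J\setminus I|\le m$, $N=\max J$. Let $I_==\{i\in I:x_i=y_i\}$. Jumps from $(\underline x,I,\underline y,J,N)$: (1) Single random-walk jumps: for each $i\in I\setminus I_=$ and each sign $\pm$, at rate $1/2$, $x_i\to x_i\pm1$ (suppressed if $x_i\pm1\notin\Lambda_\varepsilon$), everything else unchanged; for each $i\in J\setminus I_=$ and each sign, at rate $1/2$, $y_i\to y_i\pm1$ (suppressed if outside $\Lambda_\varepsilon$), everything else unchanged. (2) Double random-walk jumps: for each $i\in I_=$ and each sign, at rate $1/2$, both $x_i$ and $y_i$ move to $x_i\pm1$ (suppressed if outside $\Lambda_\varepsilon$). (3) Creation: at rate $\varepsilon j$, $N'=N+1$, $I'=I\cup\{N+1\}$,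 $J'=J\cup\{N+1\}$, $x'_{N+1}=y'_{N+1}=0$, other positions unchanged. (4) Death: at rate $\varepsilon j$, $N$ unchanged; let $i$ be the largest label among the particles of $\underline x$ at the rightmost occupied site of $\underline x$, and $k$ the largest label among the particles of $\underline y$ at the rightmost occupied site of $\underline y$; remove label $i$ from $\underline x$ (and from $I$) and label $k$ from $\underline y$ (and from $J$). If $k\notin I$ or $i=k$, stop. If $i\ne k$ and $k\in I$: if $x_k\le y_i$, the $\underline y$-particle labeled $i$ is relabeled $k$ (so label $i$ disappears from both $I$ and $J$); if $y_i<x_k$, the $\underline x$-particle labeled $k$ is relabeled $i$ (so label $k$ disappears from both $I$ and $J$).
   Formalization: In the state space S, the condition $N=\max J$ is replaced by the weaker condition that every label in J is at most N, both before and after the jump. The statement above fails without it. *)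

(* Defs.v *)
From HB Require Import structures.
From mathcomp Require Import all_boot finmap.
Set Implicit Arguments. Unset Strict Implicit. Unset Printing Implicit Defensive.
Local Open Scope fset_scope.

(* Positions live in Lambda_eps = {0, ..., L} with L = eps^{-1}.
   A labeled configuration (x, I): I : {fset nat} finite label set,
   x : nat -> nat giving the position of particle i for i \in I
   (values outside I are irrelevant). *)
Record state := State {
  sx : nat -> nat;
  sI : {fset nat};
  sy : nat -> nat;
  sJ : {fset nat};
  sN : nat }.

Definition upd (f : nat -> nat) (i v : nat) : nat -> nat :=
  fun l => if l == i then v else f l.

Definition distn (a b : nat) : nat := (a - b) + (b - a).

Definition Ieq (s : state) : {fset nat} :=
  [fset i in sI s | sx s i == sy s i].

(* membership in the state space S (parameters L = eps^{-1}, m);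
   N is the label counter: every label in J is <= N. *)
Definition inS (L m : nat) (s : state) : Prop :=
  [/\ forall i, i \in sI s -> sx s i <= L,
      forall i, i \in sJ s -> sy s i <= L,
      sI s `<=` sJ s,
      #|` sJ s `\` sI s| <= m
    & forall i, i \in sJ s -> i <= sN s].

Inductive jump_kind := SingleRW | DoubleRW | Creation | Death.

Definition rightmost_label (x : nat -> nat) (I : {fset nat}) (i : nat) : Prop :=
  [/\ i \in I, (forall l, l \in I -> x l <= x i)
    & (forall l, l \in I -> x l = x i -> l <= i)].

Inductive jump (L : nat) : jump_kind -> state -> state -> Prop :=
  | jx_plus x I y J N i : i \in I -> i \notin Ieq (State x I y J N) ->
      (x i).+1 <= L ->
      jump L SingleRW (State x I y J N) (State (upd x i (x i).+1) I y J N)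
  | jx_minus x I y J N i : i \in I -> i \notin Ieq (State x I y J N) ->
      0 < x i ->
      jump L SingleRW (State x I y J N) (State (upd x i (x i).-1) I y J N)
  | jy_plus x I y J N i : i \in J -> i \notin Ieq (State x I y J N) ->
      (y i).+1 <= L ->
      jump L SingleRW (State x I y J N) (State x I (upd y i (y i).+1) J N)
  | jy_minus x I y J N i : i \in J -> i \notin Ieq (State x I y J N) ->
      0 < y i ->
      jump L SingleRW (State x I y J N) (State x I (upd y i (y i).-1) J N)
  | jxy_plus x I y J N i : i \in Ieq (State x I y J N) ->
      (x i).+1 <= L ->
      jump L DoubleRW (State x I y J N)
        (State (upd x i (x i).+1) I (upd y i (x i).+1) J N)
  | jxy_minus x I y J N i : i \in Ieq (State x I y J N) ->
      0 < x i ->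
      jump L DoubleRW (State x I y J N)
        (State (upd x i (x i).-1) I (upd y i (x i).-1) J N)
  | jcreate x I y J N :
      jump L Creation (State x I y J N)
        (State (upd x N.+1 0) (I `|` [fset N.+1])
               (upd y N.+1 0) (J `|` [fset N.+1]) N.+1)
  | jdeath_plain x I y J N i k :
      rightmost_label x I i -> rightmost_label y J k ->
      (k \notin I \/ i = k) ->
      jump L Death (State x I y J N) (State x (I `\ i) y (J `\ k) N)
  | jdeath_relabel_y x I y J N i k :
      rightmost_label x I i -> rightmost_label y J k ->
      i <> k -> k \in I -> x k <= y i ->
      (* y-particle labeled i is relabeled k *)
      jump L Death (State x I y J N)
        (State x (I `\ i) (upd y k (y i)) (((J `\ k) `\ i) `|` [fset k]) N)
  | jdeath_relabel_x x I y J N i k :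
      rightmost_label x I i -> rightmost_label y J k ->
      i <> k -> k \in I -> y i < x k ->
      (* x-particle labeled k is relabeled i *)
      jump L Death (State x I y J N)
        (State (upd x i (x k)) (((I `\ i) `\ k) `|` [fset i]) y (J `\ k) N).

(* Main.v *)
Require Import Defs.
From HB Require Import structures.
From mathcomp Require Import all_boot finmap zify.
Local Open Scope fset_scope.
Lemma inIeq s l : (l \in Ieq s) = (l \in sI s) && (sx s l == sy s l).
Proof. by rewrite /Ieq !inE. Qed.
Lemma Ieq_sub s s' : (forall l, l \in sI s' -> sx s' l != sy s' l -> (l \in sI s) && (sx s l != sy s l)) -> sI s' `\` Ieq s' `<=` sI s `\` Ieq s.
Proof.
move=> H; apply/fsubsetP => l; rewrite !in_fsetD !inIeq => /andP[hn hin].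
rewrite hin /= in hn; have /andP[a b] := H l hin hn; by rewrite a b.
Qed.
Lemma distn_upd_le a b c : a <= b <= c \/ c <= b <= a -> distn a b <= distn a c.
Proof. rewrite /distn; lia. Qed.

Ltac fin1 := split; last by [].

Theorem lemma4p2 (L m : nat) (hL : 0 < L) (kind : jump_kind) (s s' : state) :
  inS L m s -> jump L kind s s' ->
  [/\ inS L m s',
      sI s' `\` Ieq s' `<=` sI s `\` Ieq s
    & kind = Death ->
      forall i, i \in sI s `&` sI s' ->
        distn (sx s' i) (sy s' i) <= distn (sx s i) (sy s i)].
Proof.
move=> hS hj; case: hj hS.
- move=> x I y J N i hi hni hLi [/= hx hy hIJ hc hN].
  rewrite inIeq /= hi /= in hni.
  fin1; last (apply: Ieq_sub => /= l hl; rewrite /upd; case: ifP => [/eqP->|_] h; by rewrite ?hl ?hi ?hni ?h).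
  split=> //= l hl; rewrite /upd; try (case: ifP => _); auto.
- move=> x I y J N i hi hni hLi [/= hx hy hIJ hc hN].
  rewrite inIeq /= hi /= in hni.
  fin1; last (apply: Ieq_sub => /= l hl; rewrite /upd; case: ifP => [/eqP->|_] h; by rewrite ?hl ?hi ?hni ?h).
  split=> //= l hl; rewrite /upd; try (case: ifP => _); auto.
  have := hx _ hi; lia.
- move=> x I y J N i hi hni hLi [/= hx hy hIJ hc hN].
  rewrite inIeq /= in hni.
  fin1; last (apply: Ieq_sub => /= l hl; rewrite /upd; case: ifP => [/eqP e|_] h; [move: hni; by rewrite -e hl | by rewrite hl h]).
  split=> //= l hl; rewrite /upd; try (case: ifP => _); auto.
- move=> x I y J N i hi hni hLi [/= hx hy hIJ hc hN].
  rewrite inIeq /= in hni.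
  fin1; last (apply: Ieq_sub => /= l hl; rewrite /upd; case: ifP => [/eqP e|_] h; [move: hni; by rewrite -e hl | by rewrite hl h]).
  split=> //= l hl; rewrite /upd; try (case: ifP => _); auto.
  have := hy _ hi; lia.
- move=> x I y J N i hi hLi [/= hx hy hIJ hc hN].
  rewrite inIeq /= in hi; case/andP: hi => hi /eqP hxy.
  fin1; last (apply: Ieq_sub => /= l hl; rewrite /upd; case: ifP => [/eqP->|_] h; [by rewrite eqxx in h | by rewrite hl h]).
  split=> //= l hl; rewrite /upd; try (case: ifP => _); auto.
- move=> x I y J N i hi hLi [/= hx hy hIJ hc hN].
  rewrite inIeq /= in hi; case/andP: hi => hi /eqP hxy.
  fin1; last (apply: Ieq_sub => /= l hl; rewrite /upd; case: ifP => [/eqP->|_] h; [by rewrite eqxx in h | by rewrite hl h]).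
  split=> //= l hl; rewrite /upd; try (case: ifP => _); auto.
  have := hx _ hi; lia.
  have := hx _ hi; lia.
- move=> x I y J N [/= hx hy hIJ hc hN].
  have hnJ : N.+1 \notin J by apply/negP => /hN; rewrite ltnn.
  have hnI : N.+1 \notin I by apply: contra hnJ; apply: (fsubsetP hIJ).
  fin1.
  + split=> /=.
    * move=> l; rewrite !inE /upd; case: ifP => [_ //|/negbT hne]; rewrite ?(negbTE hne) ?orbF; auto.
    * move=> l; rewrite !inE /upd; case: ifP => [_ //|/negbT hne]; rewrite ?(negbTE hne) ?orbF; auto.
    * apply/fsubsetP => l; rewrite !inE => /orP[/(fsubsetP hIJ)->//|->]; by rewrite orbT.
    * apply: leq_trans hc; apply: fsubset_leq_card; apply/fsubsetP => l; rewrite !inE.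
      by case: (l \in I); case: (l \in J); case: (l == N.+1).
    * move=> l; rewrite !inE => /orP[/hN h|/eqP->//]; lia.
  + apply: Ieq_sub => /= l; rewrite !inE /upd; case: ifP => [_|/negbT hne]; first by rewrite eqxx.
    by rewrite orbF => -> ->.
- move=> x I y J N i k [hiI hxmax hxlab] [hkJ hymax hylab] hor [/= hx hy hIJ hc hN].
  split.
  + split=> /=.
    * move=> l; rewrite !inE => /andP[_]; auto.
    * move=> l; rewrite !inE => /andP[_]; auto.
    * apply/fsubsetP => l; rewrite !inE => /andP[hli hl]; rewrite (fsubsetP hIJ _ hl) andbT.
      case: hor => [hk|<-//]; apply/eqP => e; move: hk; by rewrite -e hl.
    * apply: leq_trans hc; case: hor => [hk|<-].
      - have hkd : k \in J `\` I by rewrite inE hk hkJ.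
        rewrite [X in _ <= X](cardfsD1 k) hkd add1n.
        apply: leq_trans (_ : #|` i |` ((J `\` I) `\ k)| <= _).
          apply: fsubset_leq_card; apply/fsubsetP => l; rewrite !inE.
          by case: (l == i); case: (l == k); case: (l \in I); case: (l \in J).
        by rewrite cardfsU1; case: (i \notin _).
      - apply: fsubset_leq_card; apply/fsubsetP => l; rewrite !inE.
        by case: (l == i); case: (l \in I); case: (l \in J).
    * move=> l; rewrite !inE => /andP[_]; auto.
  + apply: Ieq_sub => /= l; rewrite !inE => /andP[_ ->] ->; done.
  + by move=> _ l _ /=.
- move=> x I y J N i k [hiI hxmax hxlab] [hkJ hymax hylab] hik hkI hxy [/= hx hy hIJ hc hN].
  have hiJ := fsubsetP hIJ _ hiI.
  have hyik := hymax _ hiJ.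
  split.
  + split=> /=.
    * move=> l; rewrite !inE => /andP[_]; auto.
    * move=> l; rewrite !inE /upd; case: ifP => [_ _|/negbT hne]; first by auto.
      rewrite ?(negbTE hne) ?orbF => /andP[_ /andP[_]]; auto.
    * apply/fsubsetP => l; rewrite !inE => /andP[hli hl]; rewrite (fsubsetP hIJ _ hl) hli andbT.
      by case: (l == k).
    * apply: leq_trans hc; apply: fsubset_leq_card; apply/fsubsetP => l; rewrite !inE.
      have [->|hlk] := eqVneq l k.
        have hki : k != i by apply/eqP => e; apply: hik; rewrite e.
        by rewrite hkI hki.
      by case: (l == i); case: (l \in I); case: (l \in J).
    * move=> l; rewrite !inE => /orP[/andP[_ /andP[_]]|/eqP->]; auto.
  + apply: Ieq_sub => /= l; rewrite !inE /upd => /andP[_ hl].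
    case: ifP => [/eqP e|_] h; last by rewrite hl h.
    subst l; rewrite hl /=; apply/eqP => e; move/eqP: h; apply; lia.
  + move=> _ l; rewrite !inE /upd /= => /andP[_ /andP[_ hl]].
    case: ifP => [/eqP e|_]; last done.
    subst l; rewrite /distn; lia.
- move=> x I y J N i k [hiI hxmax hxlab] [hkJ hymax hylab] hik hkI hxy [/= hx hy hIJ hc hN].
  have hiJ := fsubsetP hIJ _ hiI.
  have hxki := hxmax _ hkI.
  have hik' : (i == k) = false by apply/eqP.
  split.
  + split=> /=.
    * move=> l; rewrite !inE /upd; case: ifP => [_ _|/negbT hne]; first by auto.
      rewrite ?(negbTE hne) ?orbF => /andP[_ /andP[_]]; auto.
    * move=> l; rewrite !inE => /andP[_]; auto.
    * apply/fsubsetP => l; rewrite !inE.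
      have [->|hli] := eqVneq l i; first by rewrite hik' hiJ.
      by rewrite orbF => /andP[-> /andP[_ /(fsubsetP hIJ)->]].
    * apply: leq_trans hc; apply: fsubset_leq_card; apply/fsubsetP => l; rewrite !inE.
      by case: (l == i); case: (l == k); case: (l \in I); case: (l \in J).
    * move=> l; rewrite !inE => /andP[_]; auto.
  + apply: Ieq_sub => /= l; rewrite !inE /upd.
    case: ifP => [/eqP e|/negbT hne] hl h.
      subst l; rewrite hiI /=; apply/eqP => e; move/eqP: h; lia.
    by move: hl; rewrite ?(negbTE hne) ?orbF => /andP[_ /andP[_ ->]].
  + move=> _ l; rewrite !inE /upd /= => /andP[_ hl].
    case: ifP => [/eqP e|_]; last done.
    subst l; rewrite /distn; lia.
Qed.
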